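(* For $A\in\mathcal A_n$, the following are equivalent: (1) $A$ is (the permutation matrix of) a bigrassmannian permutation; (2) $A$ has exactly one essential point.
   Context: $\mathcal A_n$ is the set of $n\times n$ alternating sign matrices (entries in $\{-1,0,1\}$, partial row and column sums in $\{0,1\}$, full row and column sums $1$); a permutation $w\in S_n$ is identified with its permutation matrix (entry $1$ at $(i,w(i))$). A permutation $w\in S_n$ is bigrassmannian if there is exactly one $i\in[n-1]$ with $w^{-1}(i)>w^{-1}(i+1)$ and exactly one $j\in[n-1]$ with $w(j)>w(j+1)$. The corner sum matrix is $\widetilde A(i,j)=\sum_{p\le i,q\le j}a_{pq}$, with $\widetilde A(i,j)=0$ if $i=0$ or $j=0$. For $i<j$, $k<l$, $R_{ij}^{kl}=\{(p,q): i\le p<j,\ k\le q<l\}$ is an essential rectangle of $A$ if for all $(p,q)\in R_{ij}^{kl}$: $\widetilde A(p,k)=\widetilde A(p,k-1)$, $\widetilde A(p,l)=\widetilde A(p,l-1)+1$, $\widetilde A(i,q)=\widetilde A(i-1,q)$, $\widetilde A(j,q)=\widetilde A(j-1,q)+1$. An essential point is an essential rectangle with $j=i+1$, $l=k+1$. *)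

(* Defs.v *)
From HB Require Import structures.
From mathcomp Require Import all_boot all_order all_fingroup all_algebra.
Set Implicit Arguments. Unset Strict Implicit. Unset Printing Implicit Defensive.
Import Order.TTheory GRing.Theory Num.Theory.

Local Open Scope ring_scope.

(* Matrices are 'M[int]_n with 0-indexed rows/columns; the paper's row p
   (1-indexed) is our row p-1. *)

Definition is_asm (n : nat) (A : 'M[int]_n) : Prop :=
  [/\ forall i j, A i j \in [:: -1; 0; 1],
      forall i (j : 'I_n), (\sum_(q < n | (q <= j)%N) A i q) \in [:: 0; 1],
      forall (i : 'I_n) j, (\sum_(p < n | (p <= i)%N) A p j) \in [:: 0; 1],
      forall i, \sum_(q < n) A i q = 1
    & forall j, \sum_(p < n) A p j = 1].

(* Corner sum matrix, 1-indexed: cs A i j = sum_{p<=i, q<=j} a_pq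
   (0 when i = 0 or j = 0). *)
Definition cs (n : nat) (A : 'M[int]_n) (i j : nat) : int :=
  \sum_(p < n | (p < i)%N) \sum_(q < n | (q < j)%N) A p q.

Definition essential_rect (n : nat) (A : 'M[int]_n) (i j k l : nat) : Prop :=
  [&& (1 <= i)%N, (i < j)%N, (j <= n)%N, (1 <= k)%N, (k < l)%N & (l <= n)%N] /\
      forall p q, (i <= p < j)%N -> (k <= q < l)%N ->
        [/\ cs A p k = cs A p k.-1,
            cs A p l = cs A p l.-1 + 1,
            cs A i q = cs A i.-1 q
          & cs A j q = cs A j.-1 q + 1].

Definition essential_point (n : nat) (A : 'M[int]_n) (i k : nat) : Prop :=
  essential_rect A i i.+1 k k.+1.

Definition num_descents (n : nat) (w : 'S_n) : nat :=
  #|[set p : 'I_n * 'I_n | (val p.2 == (val p.1).+1) && (w p.2 < w p.1)%N]|.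

Definition bigrassmannian (n : nat) (w : 'S_n) : Prop :=
  num_descents w = 1%N /\ num_descents (w^-1)%g = 1%N.

(* Main.v *)
Require Import Defs.
From HB Require Import structures.
From mathcomp Require Import all_boot all_order all_fingroup all_algebra.
From mathcomp Require Import ring lra zify.
Set Implicit Arguments. Unset Strict Implicit. Unset Printing Implicit Defensive.
Import Order.TTheory GRing.Theory Num.Theory.
Local Open Scope ring_scope.


Definition hh (c : nat -> nat -> int) i k := c i k - c i k.-1.
Definition rr (c : nat -> nat -> int) i k := c i k - c i.-1 k.
Definition ee (c : nat -> nat -> int) i k := rr c i k - rr c i k.-1.

Lemma eeE c i k : ee c i k = hh c i k - hh c i.-1 k.
Proof. rewrite /ee /rr /hh; lia. Qed.

Definition good n (c : nat -> nat -> int) : Prop :=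
  [/\ forall i k, hh c i k = 0 \/ hh c i k = 1,
      forall i k, rr c i k = 0 \/ rr c i k = 1,
      (forall k, c 0%N k = 0) /\ (forall i, c i 0%N = 0),
      forall i k, (1 <= i <= n)%N -> (n <= k)%N -> rr c i k = 1
    & forall i k, (1 <= k <= n)%N -> (n <= i)%N -> hh c i k = 1].

Definition ess n (c : nat -> nat -> int) i k : Prop :=
  [/\ (1 <= i < n)%N && (1 <= k < n)%N, hh c i k = 0, hh c i k.+1 = 1,
      rr c i k = 0 & rr c i.+1 k = 1].

Lemma core n c i k0 B : good n c -> (1 <= i < n)%N -> (1 <= k0)%N -> (k0 < B)%N ->
  (B <= n.+1)%N -> hh c i k0 = 0 -> rr c i k0 = 0 -> (B = n.+1 \/ hh c i B = 1) ->
  (forall k, (k0 <= k < B)%N -> rr c i.+1 k = 1) -> exists k, ess n c i k.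
Proof.
move=> [Hh Hr [Hc0 Hc0'] Hr1 Hh1] /andP[i1 iln] k01 k0B Bn hk0 rk0 HB Hrow.
pose P := fun k => [&& (k0 <= k)%N, (k < B)%N, hh c i k == 0 & rr c i k == 0].
have exP : exists k, P k by exists k0; rewrite /P leqnn k0B hk0 rk0 !eqxx.
have ubP : forall k, P k -> (k <= B)%N by move=> k /and4P[_ /ltnW ->].
case: (ex_maxnP exP ubP) => k /and4P[h1 h2 /eqP h3 /eqP h4] hmax.
have kn : (k < n)%N.
  rewrite ltnNge; apply/negP => nk.
  have := Hr1 i k; rewrite i1 (ltnW iln) nk => /(_ isT isT); rewrite h4 => //.
exists k; split => //.
- by rewrite i1 iln kn andbT (leq_trans k01 h1).
- have [kB|kB] := eqVneq k.+1 B.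
    case: HB => [HB|<-]; last by rewrite kB.
    by move: kB kn; rewrite HB => /eqP; rewrite eqSS => /eqP ->; rewrite ltnn.
  have kB' : (k.+1 < B)%N by rewrite ltn_neqAle kB h2.
  have : ~~ P k.+1 by apply/negP => /hmax; rewrite ltnn.
  rewrite /P kB' (leq_trans h1 (leqnSn _)) /= negb_and.
  case/orP => /eqP H.
    by case: (Hh i k.+1).
  have := eeE c i k.+1; rewrite /ee /= h4.
  case: (Hr i k.+1) => // ->.
  case: (Hh i k.+1) => ->; case: (Hh i.-1 k.+1) => ->; lia.
- apply: Hrow; by rewrite h1 h2.
Qed.


Lemma neg1 n c P Q : good n c -> ee c P Q = -1 ->
  [/\ rr c P Q = 0, rr c P Q.-1 = 1, hh c P Q = 0 & hh c P.-1 Q = 1].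
Proof.
move=> [Hh Hr _ _ _] He; have := eeE c P Q; rewrite He.
move: He; rewrite /ee.
case: (Hr P Q) => ->; case: (Hr P Q.-1) => ->;
case: (Hh P Q) => ->; case: (Hh P.-1 Q) => -> //; lia.
Qed.

Lemma hstep n c i k : good n c -> hh c i k <> 0 -> hh c i k = 1.
Proof. by move=> [Hh _ _ _ _]; case: (Hh i k). Qed.
Lemma rstep n c i k : good n c -> rr c i k <> 0 -> rr c i k = 1.
Proof. by move=> [_ Hr _ _ _]; case: (Hr i k). Qed.

Lemma below n c P Q : good n c -> (1 <= P <= n)%N -> (1 <= Q <= n)%N ->
  ee c P Q = -1 -> exists i k, (P <= i)%N /\ ess n c i k.
Proof.
move=> G /andP[P1 Pn] /andP[Q1 Qn] He.
have [_ _ hPQ _] := neg1 G He. have [rPQ _ _ _] := neg1 G He.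
have G' := G; case: G' => [Hh Hr [Hc0 Hc0'] Hr1 Hh1].
pose pr := fun x : 'I_n.+1 * 'I_n.+1 =>
  [&& (P <= x.1)%N, (1 <= x.2)%N, hh c x.1 x.2 == 0 & rr c x.1 x.2 == 0].
have px0 : pr (inord P, inord Q).
  by rewrite /pr /= !inordK ?ltnS // leqnn Q1 hPQ rPQ eqxx.
case: (arg_maxnP (fun x : 'I_n.+1 * 'I_n.+1 => (val x.1 + val x.2)%N) px0) => [[i k]] /and4P[/= Pi k1 /eqP hik /eqP rik] hmax.
have ilen : (i <= n)%N by rewrite -ltnS.
have klen : (k <= n)%N by rewrite -ltnS.
have i1 : (1 <= i)%N by apply: leq_trans Pi.
have iln : (i < n)%N.
  rewrite ltn_neqAle ilen andbT; apply/eqP => ein.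
  by have := Hh1 i k; rewrite hik k1 klen ein leqnn => /(_ isT isT).
have kln : (k < n)%N.
  rewrite ltn_neqAle klen andbT; apply/eqP => ein.
  by have := Hr1 i k; rewrite rik i1 ilen ein leqnn => /(_ isT isT).
exists (val i), (val k); split => //; split => //.
- by rewrite i1 iln k1 kln.
- have := hmax (inord i, inord k.+1); rewrite /pr /= !inordK ?ltnS //.
  rewrite Pi /= addnS ltnn => H.
  have : ~~ ((hh c i k.+1 == 0) && (rr c i k.+1 == 0)).
    by apply/negP => /andP[a b]; move: (H); rewrite a b => /(_ isT).
  rewrite negb_and => /orP[/eqP /(hstep G) //|/eqP /(rstep G) rk].
  have := eeE c i k.+1; rewrite /ee /= rk rik.
  case: (Hh i k.+1) => ->; case: (Hh i.-1 k.+1) => ->; lia.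
- have := hmax (inord i.+1, inord k); rewrite /pr /= !inordK ?ltnS //.
  rewrite (leq_trans Pi (leqnSn _)) k1 /= addSn ltnn => H.
  have : ~~ ((hh c i.+1 k == 0) && (rr c i.+1 k == 0)).
    by apply/negP => /andP[a b]; move: (H); rewrite a b => /(_ isT).
  rewrite negb_and => /orP[/eqP /(hstep G) hk|/eqP /(rstep G) //].
  have := eeE c i.+1 k; rewrite /ee /= hk hik.
  case: (Hr i.+1 k) => // ->; case: (Hr i.+1 k.-1) => ->; lia.
Qed.


Lemma rmono c i k m : (forall k, (1 <= k)%N -> 0 <= ee c i k) -> (k <= m)%N ->
  rr c i k <= rr c i m.
Proof.
move=> Hn /subnK <-; elim: (m - k)%N => [|d IH] //.
rewrite addSn; apply: le_trans IH _.
have := Hn (d + k).+1 isT; rewrite /ee /=; lia.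
Qed.

Lemma hmono c i k d : (forall i', (i < i' <= i + d)%N -> 0 <= ee c i' k) ->
  hh c i k <= hh c (i + d) k.
Proof.
elim: d => [|d IH] Hn; first by rewrite addn0.
apply: le_trans (IH _) _.
  by move=> i' /andP[a b]; apply: Hn; rewrite a /= addnS (leq_trans b).
have := Hn (i + d).+1; rewrite addnS ltnS leq_addr leqnn => /(_ isT).
rewrite eeE /=; lia.
Qed.

Lemma above n c P Q : good n c -> (1 <= P <= n)%N -> (1 <= Q <= n)%N ->
  ee c P Q = -1 ->
  (forall i k, (1 <= i < P)%N -> (1 <= k)%N -> 0 <= ee c i k) ->
  exists i k, (i < P)%N /\ ess n c i k.
Proof.
move=> G /andP[P1 Pn] /andP[Q1 Qn] He Hnn.
have [rPQ rPQ1 hPQ hPQ1] := neg1 G He.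
have G' := G; case: G' => [Hh Hr [Hc0 Hc0'] Hr1 Hh1].
have rP0 : rr c P 0 = 0 by rewrite /rr !Hc0' subrr.
have Q2 : (1 < Q)%N.
  rewrite ltnNge; apply/negP => Q1'.
  have : Q.-1 = 0%N by lia.
  by move=> e; move: rPQ1; rewrite e rP0.
pose Pq := fun q => [&& (1 <= q)%N, (q < Q)%N & rr c P q.-1 == 0].
have exq : exists q, Pq q by exists 1%N; rewrite /Pq Q2 /= rP0 eqxx.
have ubq : forall q, Pq q -> (q <= Q)%N by move=> q /and3P[_ /ltnW ->].
case: (ex_maxnP exq ubq) => q1 /and3P[q11 q1Q /eqP rq1] qmax.
have rowP : forall k, (q1 <= k < Q)%N -> rr c P k = 1.
  move=> k /andP[a b].
  have [e|ne] := eqVneq k.+1 Q; first by move: rPQ1; rewrite -e.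
  have kQ : (k.+1 < Q)%N by rewrite ltn_neqAle ne b.
  apply: (rstep G) => H.
  have := qmax k.+1; rewrite /Pq kQ /= H eqxx => /(_ isT); lia.
have hq1 : hh c P.-1 q1 = 0.
  have := eeE c P q1; rewrite /ee rq1 (rowP q1) ?leqnn ?q1Q //.
  have := Hh P q1; have := Hh P.-1 q1; lia.
pose Pp := fun p => hh c p Q == 1.
have exp : exists p, Pp p by exists P.-1; rewrite /Pp hPQ1.
case: (ex_minnP exp) => p1 /eqP hp1 pmin.
have p1P : (p1 <= P.-1)%N by apply: pmin; rewrite /Pp hPQ1.
have p11 : (1 <= p1)%N.
  rewrite lt0n; apply/eqP => e; move: hp1; rewrite e /hh !Hc0 subrr => /eqP.
  by rewrite eq_sym oner_eq0.
have hp10 : hh c p1.-1 Q = 0.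
  case: (Hh p1.-1 Q) => // H.
  have := pmin p1.-1; rewrite /Pp H eqxx => /(_ isT); lia.
have rp1 : rr c p1 q1 = 0.
  have hr : rr c p1 Q.-1 = 0.
    have := eeE c p1 Q; rewrite /ee hp1 hp10.
    have := Hr p1 Q; have := Hr p1 Q.-1; lia.
  have := @rmono c p1 q1 Q.-1 (fun k k1 => Hnn p1 k (ltac:(lia)) k1) (ltac:(lia)).
  rewrite hr; have := Hr p1 q1; lia.
pose Pi := fun i => [&& (1 <= i)%N, (i < P)%N & rr c i q1 == 0].
have exi : exists i, Pi i by exists p1; rewrite /Pi p11 rp1 eqxx; lia.
have ubi : forall i, Pi i -> (i <= P)%N by move=> i /and3P[_ /ltnW ->].
case: (ex_maxnP exi ubi) => i /and3P[i1 iP /eqP ri] imax.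
have hi : hh c i q1 = 0.
  have := @hmono c i q1 (P.-1 - i)%N.
  rewrite subnKC; last by lia.
  rewrite hq1 => H.
  have : hh c i q1 <= 0.
    apply: H => i' /andP[a b]; apply: Hnn => //; lia.
  have := Hh i q1; lia.
have [eiP|neiP] := eqVneq i P.-1.
  have HB : Q = n.+1 \/ hh c i Q = 1 by right; rewrite eiP.
  have Hrow : forall k, (q1 <= k < Q)%N -> rr c i.+1 k = 1.
    by move=> k; rewrite eiP prednK //; exact: rowP.
  have [k Hk] := @core n c i q1 Q G (ltac:(lia)) q11 q1Q (ltac:(lia)) hi ri HB Hrow.
  by exists i, k.
have iP' : (i.+1 < P)%N by lia.
have ri1 : rr c i.+1 q1 = 1.
  apply: (rstep G) => H.
  by have := imax i.+1; rewrite /Pi iP' H eqxx /= => /(_ isT); rewrite ltnn.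
have Hrow : forall k, (q1 <= k < n.+1)%N -> rr c i.+1 k = 1.
  move=> k /andP[a _].
  have := @rmono c i.+1 q1 k (fun k k1 => Hnn i.+1 k (ltac:(lia)) k1) a.
  rewrite ri1; have := Hr i.+1 k; lia.
have [k Hk] := @core n c i q1 n.+1 G (ltac:(lia)) q11 (ltac:(lia)) (leqnn _) hi ri
    (or_introl erefl) Hrow.
by exists i, k.
Qed.


Lemma sum_ltS n (F : 'I_n -> int) (i0 : 'I_n) :
  \sum_(p < n | (p < i0.+1)%N) F p = \sum_(p < n | (p < i0)%N) F p + F i0.
Proof.
rewrite (bigD1 i0) //= addrC; congr (_ + _); apply: eq_bigl => p.
by rewrite ltnS ltn_neqAle andbC.
Qed.

Lemma sum_ge n (F : 'I_n -> int) i : (n <= i)%N ->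
  \sum_(p < n | (p < i)%N) F p = \sum_(p < n) F p.
Proof. by move=> ni; apply: eq_bigl => p; rewrite (leq_trans (ltn_ord p)). Qed.

Lemma sum_lt0 n (F : 'I_n -> int) : \sum_(p < n | (p < 0)%N) F p = 0.
Proof. by rewrite big1. Qed.

Definition rowps n (A : 'M[int]_n) (p : 'I_n) k := \sum_(q < n | (q < k)%N) A p q.

Lemma csSr n (A : 'M[int]_n) (p : 'I_n) k : cs A p.+1 k = cs A p k + rowps A p k.
Proof. by rewrite /cs sum_ltS. Qed.

Lemma csT n (A : 'M[int]_n) i k : cs A^T i k = cs A k i.
Proof.
rewrite /cs exchange_big; apply: eq_bigr => q _; apply: eq_bigr => p _.
by rewrite mxE.
Qed.

Lemma asmT n (A : 'M[int]_n) : is_asm A -> is_asm A^T.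
Proof.
case=> h1 h2 h3 h4 h5; split=> *; rewrite ?mxE //.
- by under eq_bigr do rewrite mxE.
- by under eq_bigr do rewrite mxE.
- by under eq_bigr do rewrite mxE.
- by under eq_bigr do rewrite mxE.
Qed.

Lemma rowps01 n (A : 'M[int]_n) p k : is_asm A -> rowps A p k = 0 \/ rowps A p k = 1.
Proof.
case=> _ h2 _ h4 _; rewrite /rowps.
case: k => [|k]; first by left; rewrite sum_lt0.
case: (ltnP k n) => kn.
  have := h2 p (Ordinal kn).
  have -> : \sum_(q < n | (q <= Ordinal kn)%N) A p q = \sum_(q < n | (q < k.+1)%N) A p q.
    by apply: eq_bigl => q; rewrite ltnS.
  by rewrite !inE => /orP[/eqP|/eqP]; [left|right].
by right; rewrite sum_ge ?h4 // (leq_trans kn).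
Qed.

Lemma rowps_full n (A : 'M[int]_n) p k : is_asm A -> (n <= k)%N -> rowps A p k = 1.
Proof. by case=> _ _ _ h4 _ nk; rewrite /rowps sum_ge. Qed.

Lemma cs_ge n (A : 'M[int]_n) i k : (n <= i)%N -> cs A i k = cs A n k.
Proof. by move=> ni; rewrite /cs !sum_ge. Qed.

Lemma rr_cs n (A : 'M[int]_n) (p : 'I_n) k : rr (cs A) p.+1 k = rowps A p k.
Proof. by rewrite /rr csSr /=; lia. Qed.

Lemma rr01 n (A : 'M[int]_n) i k : is_asm A -> rr (cs A) i k = 0 \/ rr (cs A) i k = 1.
Proof.
move=> hA; case: i => [|i]; first by left; rewrite /rr subrr.
case: (ltnP i n) => iN.
  by rewrite -[i]/(val (Ordinal iN)) rr_cs; apply: rowps01.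
by left; rewrite /rr /= (cs_ge A k iN) cs_ge ?subrr // (leq_trans iN).
Qed.

Lemma hh_rrT n (A : 'M[int]_n) i k : hh (cs A) i k = rr (cs A^T) k i.
Proof. by rewrite /hh /rr !csT. Qed.

Lemma cs0l n (A : 'M[int]_n) k : cs A 0 k = 0.
Proof. by rewrite /cs sum_lt0. Qed.

Lemma cs0r n (A : 'M[int]_n) i : cs A i 0 = 0.
Proof. by rewrite -csT cs0l. Qed.

Lemma rr1 n (A : 'M[int]_n) i k : is_asm A -> (1 <= i <= n)%N -> (n <= k)%N ->
  rr (cs A) i k = 1.
Proof.
move=> hA; case: i => [|i] // /andP[_ iN] nk.
by rewrite -[i]/(val (Ordinal iN)) rr_cs rowps_full.
Qed.

Lemma good_cs n (A : 'M[int]_n) : is_asm A -> good n (cs A).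
Proof.
move=> hA; have hAT := asmT hA; split.
- by move=> i k; rewrite hh_rrT; apply: rr01.
- by move=> i k; apply: rr01.
- by split=> *; rewrite ?cs0l ?cs0r.
- by move=> i k; apply: rr1.
- by move=> i k H1 H2; rewrite hh_rrT; apply: rr1.
Qed.

Lemma ee_cs n (A : 'M[int]_n) (p q : 'I_n) : ee (cs A) p.+1 q.+1 = A p q.
Proof. rewrite /ee /= !rr_cs /rowps sum_ltS; lia. Qed.

Lemma ee_big n (A : 'M[int]_n) i k : is_asm A -> (1 <= i <= n)%N -> (n < k)%N ->
  ee (cs A) i k = 0.
Proof.
move=> hA Hi nk; rewrite /ee !rr1 ?subrr //; lia.
Qed.


Lemma ess_ep n (A : 'M[int]_n) i k : ess n (cs A) i k <-> essential_point A i k.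
Proof.
rewrite /ess /essential_point /essential_rect /hh /rr; split.
  case=> H e1 e2 e3 e4; move/and3P: H => [/andP[i1 iN] k1 kN]; split.
    by rewrite i1 k1 !ltnSn iN kN.
  move=> p q /andP[a b] /andP[c d].
  have -> : p = i by lia.
  have -> : q = k by lia.
  move: e1 e2 e3 e4 => /= e1 e2 e3 e4; split; lia.
case=> /and5P[i1 _ iN k1 /andP[_ kN]] H.
have [e1 e2 e3 e4] := H i k (ltac:(lia)) (ltac:(lia)).
split; first by rewrite i1 iN k1 kN.
all: move: e1 e2 e3 e4 => /=; lia.
Qed.

Lemma ess_pair n (A : 'M[int]_n) i k : ess n (cs A) i k ->
  essential_point A (inord i : 'I_n.+1, inord k : 'I_n.+1).1
                    (inord i : 'I_n.+1, inord k : 'I_n.+1).2.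
Proof.
move=> H; have [/andP[/andP[_ iN] /andP[_ kN]] _ _ _ _] := H.
by rewrite /= !inordK -?ess_ep //; lia.
Qed.

Lemma nonneg n (A : 'M[int]_n) : is_asm A ->
  (exists! ik : 'I_n.+1 * 'I_n.+1, essential_point A ik.1 ik.2) ->
  forall p q, 0 <= A p q.
Proof.
move=> hA [ik [_ Hu]].
have ent : forall p q, A p q = -1 \/ 0 <= A p q.
  case: hA => h1 _ _ _ _ p q; move: (h1 p q); rewrite !inE.
  by case/or3P => /eqP ->; [left|right|right].
move=> p0 q0; case: (ent p0 q0) => // Hneg; exfalso.
have hex : exists m, [exists p : 'I_n, (val p == m) && [exists q, A p q == -1]].
  exists (val p0); apply/existsP; exists p0; rewrite eqxx /=; apply/existsP; exists q0.
  by rewrite Hneg.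
case: (ex_minnP hex) => m /existsP[p /andP[/eqP pm /existsP[q /eqP Apq]]] mmin.
have G := good_cs hA.
have He : ee (cs A) p.+1 q.+1 = -1 by rewrite ee_cs.
have Hnn : forall i k, (1 <= i < p.+1)%N -> (1 <= k)%N -> 0 <= ee (cs A) i k.
  move=> [|i] // k /andP[_ ip] k1.
  have iN : (i < n)%N by have := ltn_ord p; lia.
  case: (ltnP n k) => nk; first by rewrite ee_big //; lia.
  case: k k1 nk => [|k] // _ kN.
  rewrite -[i]/(val (Ordinal iN)) -[k]/(val (Ordinal kN)) ee_cs.
  case: (ent (Ordinal iN) (Ordinal kN)) => // H.
  have : (m <= i)%N.
    apply: mmin; apply/existsP; exists (Ordinal iN); rewrite eqxx /=; apply/existsP.
    by exists (Ordinal kN); rewrite H.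
  have pm' : nat_of_ord p = m := pm.
  lia.
have Pn : (1 <= p.+1 <= n)%N by rewrite ltn_ord.
have Qn : (1 <= q.+1 <= n)%N by rewrite ltn_ord.
have [i1 [k1 [i1P E1]]] := above G Pn Qn He Hnn.
have [i2 [k2 [i2P E2]]] := below G Pn Qn He.
have u1 := Hu _ (ess_pair E1).
have u2 := Hu _ (ess_pair E2).
have := congr1 (fun x => val x.1) (etrans (esym u1) u2).
have [/andP[/andP[_ i1N] _] _ _ _ _] := E1.
have [/andP[/andP[_ i2N] _] _ _ _ _] := E2.
rewrite /= !inordK; lia.
Qed.


Lemma perm_mxE' n (s : 'S_n) i j : (perm_mx s : 'M[int]_n) i j = (s i == j)%:R.
Proof. by rewrite perm_mxEsub !mxE. Qed.

Lemma sum01 n (F : 'I_n -> int) j0 : (forall j, 0 <= F j) -> \sum_j F j = 1 ->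
  F j0 = 1 -> forall j, j != j0 -> F j = 0.
Proof.
move=> Fp Fs F1 j nj.
have H : \sum_(i | i != j0) F i = 0.
  move: Fs; rewrite (bigD1 j0) //= => e.
  by rewrite -(addKr (F j0) (\sum_(i | i != j0) F i)) e F1 addNr.
have := psumr_eq0P (fun i _ => Fp i) H.
by move=> /(_ j); rewrite nj; apply.
Qed.

Lemma to_perm n (A : 'M[int]_n) : is_asm A -> (forall p q, 0 <= A p q) ->
  exists w : 'S_n, A = perm_mx w.
Proof.
move=> [h1 _ _ h4 h5] Hp.
have ex1 : forall p, exists q, A p q = 1.
  move=> p; suff H : [exists q, A p q == 1] by case/existsP: H => q /eqP; exists q.
  case: (boolP [exists q, A p q == 1]) => // /existsPn Hn; exfalso.
  have : \sum_q A p q = 0.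
    apply: big1 => q _; have := Hn q; have := Hp p q; move: (h1 p q); rewrite !inE.
    by case/or3P => /eqP ->.
  by rewrite h4 => /eqP; rewrite oner_eq0.
pose f := fun p => odflt p [pick q | A p q == 1].
have fP : forall p, A p (f p) = 1.
  move=> p; rewrite /f; case: pickP => [q /eqP //|H].
  by have [q Hq] := ex1 p; have := H q; rewrite Hq eqxx.
have finj : injective f.
  move=> p p' e; apply/eqP/negPn/negP => ne.
  have := @sum01 _ (fun i => A i (f p)) p (fun i => Hp _ _) (h5 _) (fP p) p'.
  by rewrite eq_sym ne e fP => /(_ isT) /eqP; rewrite oner_eq0.
exists (perm finj); apply/matrixP => p q; rewrite perm_mxE' permE.
have [<-|ne] := eqVneq (f p) q; first by rewrite fP.
by rewrite (@sum01 _ (fun j => A p j) (f p) (fun j => Hp _ _) (h4 _) (fP p) q) // eq_sym.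
Qed.

Lemma rowps_perm n (w : 'S_n) p k :
  rowps (perm_mx w : 'M[int]_n) p k = ((w p < k)%N)%:R.
Proof.
rewrite /rowps; under eq_bigr do rewrite perm_mxE'.
case: (ltnP (w p) k) => h.
  rewrite (bigD1 (w p)) //= eqxx big1 ?addr0 // => q /andP[_ ne].
  by rewrite eq_sym (negbTE ne).
rewrite big1 // => q qk; case: eqP => // e; by move: qk; rewrite -e ltnNge h.
Qed.

Definition Wf n (s : 'S_n) (x : nat) : nat :=
  odflt 0%N (omap (fun p : 'I_n => val (s p)) (insub x)).

Lemma WfE n (s : 'S_n) (p : 'I_n) : Wf s p = s p.
Proof. by rewrite /Wf valK. Qed.

Lemma Wf_lt n (s : 'S_n) x : (x < n)%N -> (Wf s x < n)%N.
Proof. by move=> xn; rewrite -[x]/(val (Ordinal xn)) WfE. Qed.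

Lemma Wf_inv n (s : 'S_n) x : (x < n)%N -> Wf s^-1 (Wf s x) = x.
Proof. by move=> xn; rewrite -[x]/(val (Ordinal xn)) !WfE permK. Qed.

Lemma rrW n (w : 'S_n) x k : (x < n)%N ->
  rr (cs (perm_mx w : 'M[int]_n)) x.+1 k = ((Wf w x < k)%N)%:R.
Proof.
by move=> xn; rewrite -[x]/(val (Ordinal xn)) rr_cs rowps_perm WfE.
Qed.

Lemma hhW n (w : 'S_n) i k : (k < n)%N ->
  hh (cs (perm_mx w : 'M[int]_n)) i k.+1 = ((Wf w^-1 k < i)%N)%:R.
Proof. by move=> kn; rewrite hh_rrT tr_perm_mx rrW. Qed.

Definition EE n (W Wi : nat -> nat) i k : Prop :=
  [/\ (1 <= i < n)%N && (1 <= k < n)%N, (i <= Wi k.-1)%N, (Wi k < i)%N,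
      (k <= W i.-1)%N & (W i < k)%N].

Lemma b0 (b : bool) : ((b%:R : int) = 0) <-> ~~ b.
Proof. by case: b. Qed.
Lemma b1 (b : bool) : ((b%:R : int) = 1) <-> b.
Proof. by case: b. Qed.

Lemma ess_E n (w : 'S_n) i k :
  ess n (cs (perm_mx w : 'M[int]_n)) i k <-> EE n (Wf w) (Wf w^-1) i k.
Proof.
rewrite /ess /EE.
case: (boolP ((1 <= i < n)%N && (1 <= k < n)%N)) => [B|nB]; last first.
  by split => -[].
move: (B) => /andP[/andP[i1 iN] /andP[k1 kN]].
case: i i1 iN B => [|i] // _ iN B; case: k k1 kN B => [|k] // _ kN B.
have iN' : (i < n)%N by lia.
have kN' : (k < n)%N by lia.
rewrite hhW // hhW // rrW // rrW //.
split.
  case=> _ /b0 H1 /b1 H2 /b0 H3 /b1 H4; split => //=; by rewrite leqNgt.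
case=> _ H1 H2 H3 H4; split => //.
- by apply/b0; move: H1; rewrite /= leqNgt.
- by apply/b1.
- by apply/b0; move: H3; rewrite /= leqNgt.
- by apply/b1.
Qed.

Definition Desc n (W : nat -> nat) d := (d.+1 < n)%N && (W d.+1 < W d)%N.

Lemma desc_ess n W Wi d : (forall x, (x < n)%N -> (W x < n)%N) ->
  (forall x, (x < n)%N -> Wi (W x) = x) -> Desc n W d -> exists k, EE n W Wi d.+1 k.
Proof.
move=> Wlt Winv /andP[dn lt].
pose Pj := fun j => [&& (W d.+1 <= j)%N, (j < W d)%N & (d < Wi j)%N].
have exj : exists j, Pj j by exists (W d.+1); rewrite /Pj leqnn lt Winv // ltnSn.
have ubj : forall j, Pj j -> (j <= W d)%N by move=> j /and3P[_ /ltnW ->].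
case: (ex_maxnP exj ubj) => j /and3P[j1 j2 j3] jmax.
have Wd : (W d < n)%N by apply: Wlt; lia.
have Hb : (1 <= d.+1 < n)%N && (1 <= j.+1 < n)%N.
  apply/andP; split; apply/andP; split => //; lia.
exists j.+1; split => //=.
- have [e|ne] := eqVneq j.+1 (W d); first by rewrite e Winv //; lia.
  have := jmax j.+1; rewrite /Pj.
  case: (ltnP d (Wi j.+1)) => // H; rewrite andbT.
  have -> : (W d.+1 <= j.+1)%N by lia.
  have -> : (j.+1 < W d)%N by lia.
  by move=> /(_ isT); rewrite ltnn.
Qed.

Lemma ess_desc n W Wi i k : EE n W Wi i k -> Desc n W i.-1 /\ Desc n Wi k.-1.
Proof.
case=> /andP[/andP[i1 iN] /andP[k1 kN]] H1 H2 H3 H4.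
rewrite /Desc !prednK //; split; apply/andP; split => //; lia.
Qed.

Lemma EE_sym n W Wi i k : EE n W Wi i k -> EE n Wi W k i.
Proof. by case=> /andP[a b] *; split; rewrite // b a. Qed.

Lemma nd1 n (s : 'S_n) : num_descents s = 1%N <->
  exists d, Desc n (Wf s) d /\ forall d', Desc n (Wf s) d' -> d' = d.
Proof.
rewrite /num_descents; split.
  move/eqP/cards1P => [[a b] Hs].
  have : (a, b) \in [set p : 'I_n * 'I_n | (val p.2 == (val p.1).+1) && (s p.2 < s p.1)%N].
    by rewrite Hs set11.
  rewrite inE /= => /andP[/eqP ba lt].
  exists a; split.
    have ba' : nat_of_ord b = (nat_of_ord a).+1 := ba.
    by rewrite /Desc -ba' !WfE ltn_ord lt.
  move=> d' /andP[dn lt'].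
  have dn' : (d' < n)%N by lia.
  have : (Ordinal dn', Ordinal dn) \in [set p : 'I_n * 'I_n | (val p.2 == (val p.1).+1) && (s p.2 < s p.1)%N].
    by rewrite inE; apply/andP; split => //=; rewrite -!WfE.
  by rewrite Hs in_set1 => /eqP [] <-.
move=> [d [/andP[dn lt] Du]].
have dn' : (d < n)%N by lia.
apply/eqP/cards1P; exists (Ordinal dn', Ordinal dn); apply/setP => [[a b]].
rewrite !inE /=; apply/idP/idP.
  move=> /andP[/eqP ba lt'].
  have ad : val a = d.
    apply: Du; rewrite /Desc -ba ltn_ord /=.
    by move: lt'; rewrite -!WfE ba.
  apply/eqP; congr pair; apply: val_inj => /=; first exact: ad.
  by rewrite -ad; exact: ba.
move=> /eqP [] -> -> /=; rewrite eqxx /=.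
by move: lt; rewrite -[d]/(val (Ordinal dn')) -[d.+1]/(val (Ordinal dn)) !WfE.
Qed.


Lemma EE_pair n (w : 'S_n) i k : EE n (Wf w) (Wf w^-1) i k ->
  essential_point (perm_mx w : 'M[int]_n) (inord i : 'I_n.+1, inord k : 'I_n.+1).1
                    (inord i : 'I_n.+1, inord k : 'I_n.+1).2.
Proof. by move/ess_E/ess_pair. Qed.

Lemma ep_EE n (w : 'S_n) (x : 'I_n.+1 * 'I_n.+1) :
  essential_point (perm_mx w : 'M[int]_n) x.1 x.2 -> EE n (Wf w) (Wf w^-1) x.1 x.2.
Proof. by move/ess_ep/ess_E. Qed.

Lemma pair_eq n (x : 'I_n.+1 * 'I_n.+1) i k : (i <= n)%N -> (k <= n)%N ->
  (inord i, inord k) = x -> val x.1 = i /\ val x.2 = k.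
Proof. by move=> iN kN <- /=; rewrite !inordK. Qed.

Lemma Wfi_lt n (w : 'S_n) x : (x < n)%N -> (Wf w^-1 x < n)%N.
Proof. exact: Wf_lt. Qed.
Lemma Wfi_inv n (w : 'S_n) x : (x < n)%N -> Wf w (Wf w^-1 x) = x.
Proof. by move=> xn; have := Wf_inv (w^-1) xn; rewrite invgK. Qed.

Unset Implicit Arguments.

Theorem mainTheorem8 (n : nat) (A : 'M[int]_n) (hA : is_asm A) :
  (exists w : 'S_n, bigrassmannian w /\ A = perm_mx w) <->
  (exists! ik : 'I_n.+1 * 'I_n.+1, essential_point A ik.1 ik.2).
Proof.
split.
  move=> [w [[D1 D2] ->]].
  have [d [Dd Du]] := (nd1 w).1 D1.
  have [e [De Deu]] := (nd1 w^-1).1 D2.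
  have [k HE] := desc_ess (@Wf_lt n w) (@Wf_inv n w) Dd.
  exists (inord d.+1, inord k); split; first exact: EE_pair.
  move=> x Hx; have HE' := ep_EE Hx.
  have [Dx1 Dx2] := ess_desc HE'.
  have [_ Dk] := ess_desc HE.
  have e1 := Du _ Dx1. have e2 := Deu _ Dx2. have e3 := Deu _ Dk.
  case: HE' => /andP[/andP[x1 x1n] /andP[x2 x2n]] _ _ _ _.
  case: HE => /andP[/andP[_ dn] /andP[k1 kn]] _ _ _ _.
  clear Dx1 Dx2.
  case: x x1 x1n x2 x2n e1 e2 Hx => [a b] /= a1 an b1 bn e1 e2 _.
  congr pair; apply: val_inj; rewrite /= inordK; lia.
move=> H; have Hnn := nonneg hA H.
have [w Aw] := to_perm hA Hnn.
subst A; exists w; split => //.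
case: H => [[i0 k0] [H0 Hu]].
have E0 := ep_EE H0; have [D01 D02] := ess_desc E0.
move: E0 => /= E0.
have [/andP[/andP[i01 i0n] /andP[k01 k0n]] _ _ _ _] := E0.
split; apply/nd1.
  exists i0.-1; split => // d' Dd'.
  have [k' HE'] := desc_ess (@Wf_lt n w) (@Wf_inv n w) Dd'.
  have := Hu _ (EE_pair HE').
  have [/andP[/andP[_ dn] /andP[_ kn]] _ _ _ _] := HE'.
  move=> /esym /pair_eq /= [] //; lia.
exists k0.-1; split => // e' De'.
have [i' HE'] := desc_ess (@Wfi_lt n w) (@Wfi_inv n w) De'.
have := Hu _ (EE_pair (EE_sym HE')).
have [/andP[/andP[_ dn] /andP[_ kn]] _ _ _ _] := HE'.
move=> /esym /pair_eq /= [] //; lia.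
Qed.
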